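(* Let $p$ be a prime and let $a,b,c$ be positive integers with $b>1$, $c\mid p^a-1$, $c$ a primitive divisor of $p^a-1$, and $p-1\mid c$. Put $m=ab$, $n=bc$, $u=\frac{p^a-1}{c}$, and assume $n\mid p^m-1$ and $n$ is a primitive divisor of $p^m-1$; put $k=\frac{p^m-1}{n}$. Let $\mathcal{C}=\mathcal{C}(k,p^m)$ and $\mathcal{C}_0=\mathcal{C}(u,p^a)$. Suppose the distinct weights occurring in $\mathcal{C}_0$ (including $0$) are $w_1,\dots,w_s$ with frequencies $A_{w_i}(\mathcal{C}_0)=m_i$. Then the weights of $\mathcal{C}$ are exactly the numbers $w_{\ell_1,\dots,\ell_s}=\ell_1w_1+\cdots+\ell_sw_s$ with $(\ell_1,\dots,\ell_s)\in\mathbb{N}_0^s$ and $\ell_1+\cdots+\ell_s=b$, and the tuple $(\ell_1,\dots,\ell_s)$ contributes frequency $\binom{b}{\ell_1,\dots,\ell_s}m_1^{\ell_1}\cdots m_s^{\ell_s}$; i.e. for every integer $w$, $$A_w(\mathcal{C})=\sum_{\substack{\ell_1+\cdots+\ell_s=b\\ \ell_1w_1+\cdots+\ell_sw_s=w}}\binom{b}{\ell_1,\dots,\ell_s}m_1^{\ell_1}\cdots m_s^{\ell_s}.$$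
   Context: Let $p$ be prime, $q=p^m$, $\omega$ a primitive element of $\mathbb{F}_q$, $k\mid q-1$, $n=\frac{q-1}{k}$. The irreducible cyclic code $\mathcal{C}(k,q)\subseteq\mathbb{F}_p^n$ consists of the words $c_\gamma=(\mathrm{Tr}_{q/p}(\gamma\,\omega^{ki}))_{i=0}^{n-1}$, $\gamma\in\mathbb{F}_q$. The weight $w(c)$ of a word is its number of nonzero coordinates, and the frequency of a weight is $A_w=\#\{\gamma\in\mathbb{F}_q: w(c_\gamma)=w\}$. A positive integer $d$ is a primitive divisor of $p^m-1$ if $d\mid p^m-1$ and $d\nmid p^t-1$ for all $1\le t<m$. $\binom{b}{\ell_1,\dots,\ell_s}$ is the multinomial coefficient. *)

(* Defs.v *)
From HB Require Import structures.
From mathcomp Require Import all_boot all_order all_algebra all_field.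
Set Implicit Arguments. Unset Strict Implicit. Unset Printing Implicit Defensive.
Import GRing.Theory.
Local Open Scope ring_scope.

(* Absolute trace Tr_{q/p} on a field F with q = p^m elements:
   Tr(x) = x + x^p + ... + x^(p^(m-1)); its value lies in the prime
   subfield F_p of F, so we keep it as an element of F. *)
Definition trace (F : finFieldType) (p m : nat) (x : F) : F :=
  \sum_(i < m) x ^+ (p ^ i).

Definition code_len (p m k : nat) : nat := ((p ^ m - 1) %/ k)%N.

Definition cw_weight (F : finFieldType) (p m k : nat) (omega gamma : F) : nat :=
  #|[set i : 'I_(code_len p m k) | trace p m (gamma * omega ^+ (k * i)) != 0]|.

Definition freq (F : finFieldType) (p m k : nat) (omega : F) (w : nat) : nat :=
  #|[set gamma : F | cw_weight p m k omega gamma == w]|.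

Definition primitive_divisor (p m d : nat) : Prop :=
  (d %| p ^ m - 1)%N /\ forall t : nat, (0 < t < m)%N -> ~~ (d %| p ^ t - 1)%N.

Definition multinom (s b : nat) (l : 'I_s -> nat) : nat :=
  (b`! %/ \prod_(i < s) (l i)`!)%N.

(* Main.v *)
Require Import Defs.
From HB Require Import structures.
From mathcomp Require Import all_boot all_order all_algebra all_field.
From mathcomp Require Import zify.
Module HC1.
Set Implicit Arguments. Unset Strict Implicit. Unset Printing Implicit Defensive.
Import GRing.Theory.

Lemma card_setE (T : finType) (P : pred T) : #|[set x | P x]| = \sum_(x : T) (P x : nat).
Proof. by rewrite -sum1dep_card big_mkcond; apply: eq_bigr => x _; case: (P x). Qed.

Definition prof b s (h : {ffun 'I_b -> 'I_s}) (i : 'I_s) : nat := #|[set j | h j == i]|.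
Definition Ncount b s (l : 'I_s -> nat) :=
  #|[set h : {ffun 'I_b -> 'I_s} | [forall i, prof h i == l i]]|.
Definition fcons b s (i : 'I_s) (h : {ffun 'I_b -> 'I_s}) : {ffun 'I_b.+1 -> 'I_s} :=
  [ffun j => oapp h i (unlift ord0 j)].
Definition ftail b s (h : {ffun 'I_b.+1 -> 'I_s}) : {ffun 'I_b -> 'I_s} :=
  [ffun j => h (lift ord0 j)].

Lemma fconsK b s (h : {ffun 'I_b.+1 -> 'I_s}) : fcons (h ord0) (ftail h) = h.
Proof.
apply/ffunP => j; rewrite !ffunE; case: (unliftP ord0 j) => [j'|] -> /=.
  by rewrite ffunE.
by [].
Qed.

Lemma prof_fcons b s i (h : {ffun 'I_b -> 'I_s}) i' :
  prof (fcons i h) i' = ((i == i') + prof h i')%N.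
Proof.
rewrite /prof !card_setE big_ord_recl !ffunE unlift_none /=; congr addn.
by apply: eq_bigr => j _; rewrite ffunE liftK.
Qed.

Lemma Ncount_rec b s (l : 'I_s -> nat) :
  Ncount b.+1 l = (\sum_(i | 0 < l i) Ncount b (fun i' => l i' - (i' == i)))%N.
Proof.
rewrite /Ncount card_setE.
rewrite (reindex (fun pr : 'I_s * {ffun 'I_b -> 'I_s} => fcons pr.1 pr.2)) /=; last first.
  exists (fun h : {ffun 'I_b.+1 -> 'I_s} => (h ord0, ftail h)) => [[i h] _|h _]; last exact: fconsK.
  congr pair; first by rewrite ffunE unlift_none.
  by apply/ffunP => j; rewrite !ffunE liftK.
rewrite -(pair_big xpredT xpredT (fun i (h : {ffun 'I_b -> 'I_s}) => [forall i0, prof (fcons i h) i0 == l i0] : nat)) /=.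
rewrite [RHS]big_mkcond /=; apply: eq_bigr => i _.
rewrite card_setE; case: ifP => li.
  apply: eq_bigr => h _; congr nat_of_bool; apply/forallP/forallP => H i'.
    have := eqP (H i'); rewrite prof_fcons => <-; apply/eqP.
    by rewrite eq_sym; case: (i' == i); rewrite /= ?subn0 // add1n subSS subn0.
  rewrite prof_fcons (eqP (H i')); apply/eqP; rewrite eq_sym.
  have [<-|ne] := eqVneq i i'; first by rewrite ?eqxx /=; lia.
  by rewrite /= subn0.
rewrite big1 // => h _; apply/eqP; rewrite eqb0; apply/forallP => /(_ i).
rewrite prof_fcons eqxx.
by move/eqP=> E; move: li; rewrite -E.
Qed.

Lemma Ncount_fact b s (l : 'I_s -> nat) :
  (\sum_i l i)%N = b -> (Ncount b l * \prod_i (l i)`!)%N = b`!.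
Proof.
elim: b l => [|b IH] l Hl.
  have l0 i : l i = 0%N.
    by move/eqP: Hl; rewrite sum_nat_eq0 => /forallP/(_ i)/eqP.
  rewrite big1 ?muln1; last by move=> i _; rewrite l0.
  rewrite /Ncount (_ : [set h | _] = setT) ?cardsT ?card_ffun ?card_ord //.
  apply/setP => h; rewrite !inE; apply/forallP => i; rewrite l0 /prof.
  by rewrite cards_eq0; apply/eqP/setP => -[].
rewrite Ncount_rec big_distrl /= factS -Hl big_distrl /=.
rewrite [RHS](bigID (fun i => 0 < l i)) /= [X in _ = (_ + X)%N]big1 ?addn0; last first.
  by move=> i; rewrite -eqn0Ngt => /eqP ->.
apply: eq_bigr => i li.
set l' := fun i' => _.
have Hl' : (\sum_i l' i)%N = b.
  move: Hl; rewrite (bigD1 i) // [in X in _ -> X](bigD1 i) //= /l' eqxx.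
  rewrite [X in _ -> _ + X = _](eq_bigr l) => [|j /negbTE ->]; last by rewrite subn0.
  lia.
rewrite -(IH l' Hl') (bigD1 i) //= [in RHS](bigD1 i) //= /l' eqxx.
rewrite [X in _ = _ * (_ * (_ * X))](eq_bigr (fun j => (l j)`!)) => [|j /negbTE ->]; last by rewrite subn0.
rewrite -(prednK li) factS subn1 /=; lia.
Qed.

End HC1.
Import HC1.

Module HC2.
Set Implicit Arguments. Unset Strict Implicit. Unset Printing Implicit Defensive.
Import GRing.Theory.

Lemma sum_prof b s (h : {ffun 'I_b -> 'I_s}) (F : 'I_s -> nat) :
  (\sum_j F (h j) = \sum_i prof h i * F i)%N.
Proof.
rewrite (partition_big h xpredT) //=; apply: eq_bigr => i _.
rewrite (eq_bigr (fun _ => F i)) => [|j /eqP -> //].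
by rewrite sum_nat_const /prof cardsE.
Qed.

Lemma prod_prof b s (h : {ffun 'I_b -> 'I_s}) (F : 'I_s -> nat) :
  (\prod_j F (h j) = \prod_i F i ^ prof h i)%N.
Proof.
rewrite (partition_big h xpredT) //=; apply: eq_bigr => i _.
rewrite (eq_bigr (fun _ => F i)) => [|j /eqP -> //].
by rewrite prod_nat_const /prof cardsE.
Qed.

Lemma sum_prof1 b s (h : {ffun 'I_b -> 'I_s}) : (\sum_i prof h i)%N = b.
Proof.
have E := sum_prof h (fun _ => 1%N).
rewrite (eq_bigr (fun i => prof h i)) in E; last by move=> i _; rewrite muln1.
by rewrite -E sum_nat_const card_ord muln1.
Qed.

Lemma prof_le b s (h : {ffun 'I_b -> 'I_s}) i : (prof h i <= b)%N.
Proof. by rewrite -{2}(sum_prof1 h) (bigD1 i) //= leq_addr. Qed.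

Lemma multinomE b s (l : 'I_s -> nat) :
  (\sum_i l i)%N = b -> multinom b l = Ncount b l.
Proof.
move=> Hl; rewrite /multinom -(Ncount_fact Hl) mulnK //.
by rewrite prodn_gt0 // => i; rewrite fact_gt0.
Qed.

Lemma comb (Y : finType) (g : Y -> nat) (ws : seq nat) (b w : nat) :
  uniq ws -> (forall v, (v \in ws) = (0 < #|[set y | g y == v]|)%N) ->
  #|[set f : {ffun 'I_b -> Y} | (\sum_j g (f j) == w)%N]| =
  (\sum_(l : {ffun 'I_(size ws) -> 'I_b.+1} |
          ((\sum_(i < size ws) (l i : nat)) == b) &&
          ((\sum_(i < size ws) (l i : nat) * nth 0 ws i) == w))
     multinom b (fun i => (l i : nat)) *
     \prod_(i < size ws) #|[set y | g y == nth 0 ws i]| ^ (l i : nat))%N.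
Proof.
move=> Uws Hws; set s := size ws.
set m := fun i : 'I_s => #|[set y | g y == nth 0 ws i]|.
have gin y : g y \in ws by rewrite Hws (cardD1 y) inE eqxx.
have idx_lt y : (index (g y) ws < s)%N by rewrite index_mem gin.
pose idx y := Ordinal (idx_lt y).
have nth_idx y : nth 0 ws (idx y) = g y by rewrite /= nth_index.
have idxE y i : (idx y == i) = (g y == nth 0 ws i).
  apply/eqP/eqP => [<-|E]; first by rewrite nth_idx.
  by apply: val_inj; rewrite /= E index_uniq.
rewrite card_setE.
rewrite (partition_big (fun f : {ffun 'I_b -> Y} => [ffun j => idx (f j)]) xpredT) //=.
transitivity (\sum_(h : {ffun 'I_b -> 'I_s})
   ((\sum_j nth 0 ws (h j) == w) * \prod_j m (h j)))%N.
  apply: eq_bigr => h _; rewrite big_mkcond /=.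
  transitivity (\sum_(f : {ffun 'I_b -> Y})
     ((\sum_j nth 0 ws (h j) == w) * \prod_j ((idx (f j) == h j) : nat)))%N.
    apply: eq_bigr => f _; case: eqP => [<-|ne].
      rewrite [X in _ * X]big1 => [|j _]; last by rewrite ffunE eqxx.
      rewrite muln1; congr (nat_of_bool (_ == _)); apply: eq_bigr => j _.
      by rewrite ffunE nth_idx.
    suff -> : (\prod_j ((idx (f j) == h j) : nat))%N = 0%N by rewrite muln0.
    apply/eqP; rewrite prod_nat_seq_eq0; apply/hasP.
    have [j Hj] : exists j, idx (f j) != h j.
      apply/existsP; apply: contra_notT ne => /existsPn H; apply/ffunP => j.
      by rewrite ffunE; apply/eqP; move: (H j); rewrite negbK.
    by exists j; rewrite ?mem_index_enum //= (negbTE Hj).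
  rewrite -big_distrr /=; congr muln.
  rewrite -(bigA_distr_bigA (fun (j : 'I_b) (y : Y) => ((idx y == h j) : nat))) /=.
  apply: eq_bigr => j _.
  by rewrite /m card_setE; apply: eq_bigr => y _; rewrite idxE.
pose pf := fun h : {ffun 'I_b -> 'I_s} => [ffun i => inord (prof h i) : 'I_b.+1].
have pfE h i : (pf h i : nat) = prof h i by rewrite ffunE inordK // ltnS prof_le.
rewrite (partition_big pf xpredT) //=.
rewrite [RHS]big_mkcond /=; apply: eq_bigr => l _.
rewrite (eq_bigr (fun _ => ((\sum_i (l i : nat) * nth 0 ws i == w) * \prod_i m i ^ l i)%N)); last first.
  move=> h /eqP <-; rewrite (sum_prof h (fun i => nth 0 ws i)) (prod_prof h m); congr (nat_of_bool (_ == _) * _)%N.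
    by apply: eq_bigr => i _; rewrite pfE.
  by apply: eq_bigr => i _; rewrite pfE.
rewrite sum_nat_const.
rewrite (_ : #|_| = Ncount b (fun i => (l i : nat))); last first.
  rewrite /Ncount; apply: eq_card => h; rewrite inE.
  change ((pf h == l) = [forall i, prof h i == l i]).
  apply/eqP/forallP => [<- i|H]; first by rewrite /pf ffunE inordK // ltnS prof_le.
  by apply/ffunP => i; apply: val_inj; rewrite /= pfE; apply/eqP.
have [Hl|Hl] := eqVneq (\sum_(i < s) (l i : nat))%N b.
  by rewrite /= (multinomE Hl) /=; case: (_ == w); rewrite /= ?mul1n ?mul0n ?muln0.
rewrite /=.
suff -> : Ncount b (fun i => (l i : nat)) = 0%N by [].
rewrite /Ncount; apply/eqP; rewrite cards_eq0; apply/eqP/setP => h; rewrite !inE.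
apply/negbTE; apply: contra Hl => /forallP H.
apply/eqP; transitivity (\sum_i prof h i)%N; last exact: sum_prof1.
by apply: eq_bigr => i _; apply/esym/eqP.
Qed.

End HC2.
Import HC2.

Module HT1.
Set Implicit Arguments. Unset Strict Implicit. Unset Printing Implicit Defensive.
Import GRing.Theory.
Local Open Scope ring_scope.

Section Iota.
Variables (F : fieldType) (p : nat) (chF : p \in [pchar F]).
Let pr : prime p := GRing.pcharf_prime chF.
Definition iotaf of p \in [pchar F] := fun x : 'F_p => (x : nat)%:R : F.
Local Notation io := (iotaf chF).
Lemma iotaf_nat n : io n%:R = n%:R.
Proof. by rewrite /iotaf val_Fp_nat // (GRing.natr_mod_pchar chF). Qed.
Lemma iotaf_sub : zmod_morphism io.
Proof.
move=> x y; rewrite -[x]natr_Zp -[y]natr_Zp.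
have yp : ((y : nat) <= p)%N by rewrite ltnW // -{2}(Fp_cast pr).
have E1 : ((x : nat)%:R - (y : nat)%:R : 'F_p) = (x + (p - y))%N%:R.
  by rewrite natrD natrB // pchar_Fp_0 // sub0r.
rewrite E1 !iotaf_nat natrD natrB // (GRing.pcharf0 chF) sub0r.
by [].
Qed.
Lemma iotaf_mul : monoid_morphism io.
Proof.
split; first by rewrite -(natr_Zp 1) iotaf_nat.
move=> x y; rewrite -[x]natr_Zp -[y]natr_Zp -natrM !iotaf_nat natrM.
by [].
Qed.
HB.instance Definition _ := GRing.isZmodMorphism.Build _ _ io iotaf_sub.
HB.instance Definition _ := GRing.isMonoidMorphism.Build _ _ io iotaf_mul.
End Iota.

End HT1.
Import HT1.

Module HT3.
Set Implicit Arguments. Unset Strict Implicit. Unset Printing Implicit Defensive.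
Import GRing.Theory.
Local Open Scope ring_scope.

Section Frob.
Variables (R : fieldType) (p : nat) (ch : p \in [pchar R]).
Lemma pnat_pchar i : [pchar R].-nat (p ^ i)%N.
Proof. by rewrite (eq_pnat _ (GRing.pcharf_eq ch)) pnatX pnat_id ?(GRing.pcharf_prime ch). Qed.
Lemma frobD i (x y : R) : (x + y) ^+ (p ^ i)%N = x ^+ (p ^ i)%N + y ^+ (p ^ i)%N.
Proof. exact: exprDn_pchar (pnat_pchar i). Qed.
Lemma frob_sum i (I : Type) (r : seq I) (P : pred I) (f : I -> R) :
  (\sum_(j <- r | P j) f j) ^+ (p ^ i) = \sum_(j <- r | P j) f j ^+ (p ^ i).
Proof.
apply: (big_morph (fun x => x ^+ (p ^ i))) => [x y|]; first exact: frobD.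
by rewrite expr0n expn_eq0 gtn_eqF ?(prime_gt0 (GRing.pcharf_prime ch)).
Qed.
Lemma frob_nat n i : (n%:R : R) ^+ (p ^ i) = n%:R.
Proof.
elim: i => [|i IH]; first by rewrite expn0 expr1.
by rewrite expnSr exprM IH -GRing.pFrobenius_autE (GRing.pFrobenius_aut_nat ch).
Qed.
Lemma frob_iota c i : (iotaf ch c) ^+ (p ^ i) = iotaf ch c.
Proof. exact: frob_nat. Qed.
Lemma frob_horner (P : {poly 'F_p}) (x : R) i :
  (map_poly (iotaf ch) P).[x] ^+ (p ^ i) = (map_poly (iotaf ch) P).[x ^+ (p ^ i)].
Proof.
rewrite !horner_coef frob_sum; apply: eq_bigr => j _.
by rewrite exprMn coef_map frob_iota -!exprM mulnC.
Qed.
End Frob.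

End HT3.
Import HT3.

Module HT4.
Set Implicit Arguments. Unset Strict Implicit. Unset Printing Implicit Defensive.
Import GRing.Theory.
Local Open Scope ring_scope.

Section Iso.
Variables (p a : nat) (F F0 : finFieldType) (chF : p \in [pchar F]) (chF0 : p \in [pchar F0]).
Variable (eta : F).
Hypotheses (cardF0 : #|F0| = (p ^ a)%N) (Heta : (p ^ a - 1)%N.-primitive_root eta) (Ha : (0 < a)%N).

Local Notation q := (p ^ a)%N.
Let pr : prime p := GRing.pcharf_prime chF.
Let q_gt1 : (1 < q)%N.
Proof. by rewrite -(expn0 p) ltn_exp2l ?prime_gt1. Qed.

Definition ev (P : {poly 'F_p}) : F := (map_poly (iotaf chF) P).[eta].

Lemma eta_q : eta ^+ q = eta.
Proof. by rewrite -(subnK (ltnW q_gt1)) addn1 exprS (prim_expr_order Heta) mulr1. Qed.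

Lemma evK P : ev P ^+ q = ev P.
Proof. by rewrite /ev frob_horner eta_q. Qed.
Lemma evD P Q : ev (P + Q) = ev P + ev Q. Proof. by rewrite /ev rmorphD hornerD. Qed.
Lemma evB P Q : ev (P - Q) = ev P - ev Q. Proof. by rewrite /ev rmorphB hornerD hornerN. Qed.
Lemma evM P Q : ev (P * Q) = ev P * ev Q. Proof. by rewrite /ev rmorphM hornerM. Qed.
Lemma ev1 : ev 1 = 1. Proof. by rewrite /ev rmorph1 hornerC. Qed.
Lemma evXn n : ev 'X^n = eta ^+ n. Proof. by rewrite /ev map_polyXn hornerXn. Qed.
Lemma evC c : ev c%:P = iotaf chF c. Proof. by rewrite /ev map_polyC hornerC. Qed.

Lemma minP : exists P : {poly 'F_p},
  [/\ P != 0, ev P = 0 & forall Q, Q != 0 -> ev Q = 0 -> (size P <= size Q)%N].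
Proof.
pose Pb n := [exists v : 'rV['F_p]_n, (rVpoly v != 0) && (ev (rVpoly v) == 0)].
have PbQ Q : Q != 0 -> ev Q = 0 -> Pb (size Q).
  move=> nzQ evQ; apply/existsP; exists (poly_rV Q).
  by rewrite poly_rV_K // nzQ evQ eqxx.
have Q0nz : ('X^q - 'X : {poly 'F_p}) != 0.
  rewrite subr_eq0; apply/eqP => E; have := congr1 (fun P : {poly 'F_p} => size P) E.
  by rewrite size_polyXn size_polyX => -[E']; have := q_gt1; rewrite E'.
have evQ0 : ev ('X^q - 'X) = 0 by rewrite evB evXn (evXn 1) eta_q expr1 subrr.
have exPb : exists n, Pb n by exists (size ('X^q - 'X : {poly 'F_p})); apply: PbQ.
case: (ex_minnP exPb) => n /existsP[v /andP[nzv /eqP evv]] minn.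
exists (rVpoly v); split => // Q nzQ evQ.
by apply: leq_trans (size_poly _ _) (minn _ (PbQ _ nzQ evQ)).
Qed.

Lemma kerP : exists P : {poly 'F_p},
  [/\ (1 < size P)%N, ev P = 0 & forall Q, ev Q = 0 -> P %| Q].
Proof.
case: minP => P [nzP evP minP]; exists P; split => //.
  rewrite ltnNge; apply/negP => /size1_polyC EP; move: evP.
  rewrite EP evC => /eqP; rewrite fmorph_eq0 => /eqP P0.
  by move: nzP; rewrite EP P0 eqxx.
move=> Q evQ; apply/modp_eq0P; apply/eqP; apply: contraT => nzR.
have : ev (Q %% P) = 0.
  by rewrite (divp_eq Q P) evD evM evP mulr0 add0r in evQ.
move/(minP _ nzR); rewrite leqNgt ltn_modp nzP //.
Qed.

Lemma xi_exists : exists xi : F0,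
  forall Q : {poly 'F_p}, ev Q = 0 -> (map_poly (iotaf chF0) Q).[xi] = 0.
Proof.
case: kerP => P [szP evP PdvdQ].
have Q0 : ev ('X^q - 'X) = 0 by rewrite evB evXn (evXn 1) eta_q expr1 subrr.
have := PdvdQ _ Q0; rewrite -(dvdp_map (iotaf chF0)) rmorphB /= map_polyXn map_polyX.
rewrite -cardF0 finField_genPoly => /dvdp_prod_XsubC[m Em].
have := eqp_size Em; rewrite size_prod_XsubC size_map_poly.
case Es: (mask m _) => [|x s] /=; first by move=> E; rewrite E in szP.
move=> _; exists x => Q evQ.
have [R ->] := dvdpP _ _ (PdvdQ _ evQ).
rewrite rmorphM hornerM; apply/eqP; rewrite mulf_eq0; apply/orP; right.
by rewrite -rootE (eqp_root Em) root_prod_XsubC Es mem_head.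
Qed.

End Iso.

End HT4.
Import HT4.

Module HT5.
Set Implicit Arguments. Unset Strict Implicit. Unset Printing Implicit Defensive.
Import GRing.Theory.
Local Open Scope ring_scope.

Section Psi.
Variables (p a : nat) (F F0 : finFieldType) (chF : p \in [pchar F]) (chF0 : p \in [pchar F0]).
Variable (eta : F).
Hypotheses (cardF0 : #|F0| = (p ^ a)%N) (Heta : (p ^ a - 1)%N.-primitive_root eta) (Ha : (0 < a)%N).
Variable xi : F0.
Local Notation q := (p ^ a)%N.
Local Notation ev := (ev chF eta).
Definition ev0 (Q : {poly 'F_p}) : F0 := (map_poly (iotaf chF0) Q).[xi].
Hypothesis Hxi : forall Q, ev Q = 0 -> ev0 Q = 0.

Let pr : prime p := GRing.pcharf_prime chF.
Let q_gt1 : (1 < q)%N.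
Proof. by rewrite -(expn0 p) ltn_exp2l ?prime_gt1. Qed.

Lemma ev0D P Q : ev0 (P + Q) = ev0 P + ev0 Q. Proof. by rewrite /ev0 rmorphD hornerD. Qed.
Lemma ev0B P Q : ev0 (P - Q) = ev0 P - ev0 Q. Proof. by rewrite /ev0 rmorphB hornerD hornerN. Qed.
Lemma ev0M P Q : ev0 (P * Q) = ev0 P * ev0 Q. Proof. by rewrite /ev0 rmorphM hornerM. Qed.
Lemma ev0_1 : ev0 1 = 1. Proof. by rewrite /ev0 rmorph1 hornerC. Qed.
Lemma ev0X P n : ev0 (P ^+ n) = ev0 P ^+ n.
Proof. by elim: n => [|n IH]; rewrite ?expr0 ?ev0_1 // !exprS ev0M IH. Qed.
Lemma evX P n : ev (P ^+ n) = ev P ^+ n.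
Proof. by elim: n => [|n IH]; rewrite ?expr0 ?ev1 // !exprS evM IH. Qed.

Lemma unitK (x : F) : x ^+ q = x -> x != 0 -> x ^+ (q - 1) = 1.
Proof.
move=> xq nz; apply: (mulfI nz); rewrite mulr1 -exprS.
by rewrite -(subnK (ltnW q_gt1)) addn1 in xq.
Qed.

Lemma ev0_neq0 Q : ev Q != 0 -> ev0 Q != 0.
Proof.
move=> nz; have E := unitK (evK chF Heta Ha Q) nz.
have : ev (Q ^+ (q - 1) - 1) = 0 by rewrite evB evX E ev1 subrr.
move/Hxi; rewrite ev0B ev0X ev0_1 => /eqP; rewrite subr_eq0 => /eqP E0.
apply/eqP => Z; move: E0; rewrite Z expr0n subn_eq0 leqNgt q_gt1 /=.
by move/eqP; rewrite eq_sym oner_eq0.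
Qed.

Definition rep (x : F) : {poly 'F_p} :=
  if x == 0 then 0 else 'X^(odflt 0%N (omap val [pick i : 'I_(q - 1) | eta ^+ i == x])).

Lemma ev_rep x : x ^+ q = x -> ev (rep x) = x.
Proof.
move=> xq; rewrite /rep; case: eqP => [->|/eqP nz]; first by rewrite /ev rmorph0 horner0.
case: pickP => [i /eqP Ei|none] /=; first by rewrite evXn.
have [i Ei] := prim_rootP Heta (unitK xq nz).
by have := none i; rewrite Ei eqxx.
Qed.

Definition psi x := ev0 (rep x).

Lemma psi_ev Q : psi (ev Q) = ev0 Q.
Proof.
have : ev (rep (ev Q) - Q) = 0 by rewrite evB ev_rep ?subrr // evK.
by move/Hxi; rewrite ev0B => /eqP; rewrite subr_eq0 => /eqP.
Qed.

Lemma psiB x y : x ^+ q = x -> y ^+ q = y -> psi (x - y) = psi x - psi y.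
Proof.
by move=> xq yq; rewrite -{1}(ev_rep xq) -{1}(ev_rep yq) -evB psi_ev ev0B.
Qed.
Lemma psiM x y : x ^+ q = x -> y ^+ q = y -> psi (x * y) = psi x * psi y.
Proof.
by move=> xq yq; rewrite -{1}(ev_rep xq) -{1}(ev_rep yq) -evM psi_ev ev0M.
Qed.
Lemma psiD x y : x ^+ q = x -> y ^+ q = y -> psi (x + y) = psi x + psi y.
Proof.
by move=> xq yq; rewrite -{1}(ev_rep xq) -{1}(ev_rep yq) -evD psi_ev ev0D.
Qed.
Lemma psiX x n : x ^+ q = x -> psi (x ^+ n) = psi x ^+ n.
Proof. by move=> xq; rewrite -{1}(ev_rep xq) -evX psi_ev ev0X. Qed.
Lemma psi0 : psi 0 = 0.
Proof. by rewrite /psi /rep eqxx /ev0 rmorph0 horner0. Qed.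
Lemma psi1 : psi 1 = 1.
Proof. by rewrite -(ev1 chF eta) psi_ev ev0_1. Qed.
Lemma psi_eq0 x : x ^+ q = x -> psi x = 0 -> x = 0.
Proof.
move=> xq; rewrite /psi => /eqP; apply: contraTeq => nz.
by apply: ev0_neq0; rewrite ev_rep.
Qed.
Lemma psi_inj x y : x ^+ q = x -> y ^+ q = y -> psi x = psi y -> x = y.
Proof.
move=> xq yq E; apply/eqP; rewrite -subr_eq0; apply/eqP; apply: psi_eq0.
  by rewrite frobD // (exprNn_pchar _ (pnat_pchar chF a)) xq yq.
by rewrite psiB // E subrr.
Qed.

Lemma psi_sum (I : Type) (r : seq I) (P : pred I) (f : I -> F) :
  (forall i, f i ^+ q = f i) ->
  (\sum_(i <- r | P i) f i) ^+ q = \sum_(i <- r | P i) f i /\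
  psi (\sum_(i <- r | P i) f i) = \sum_(i <- r | P i) psi (f i).
Proof.
move=> Hf; apply: (big_rec2 (fun x y => x ^+ q = x /\ psi x = y)).
  by rewrite expr0n gtn_eqF ?psi0 // ltnW.
move=> i x y _ [xq px]; split; first by rewrite frobD // Hf xq.
by rewrite psiD // px.
Qed.

Lemma psi_trace x : x ^+ q = x -> (trace p a (psi x) == 0) = (trace p a x == 0).
Proof.
move=> xq; rewrite /trace.
have Hf (i : 'I_a) : (x ^+ (p ^ i)) ^+ q = x ^+ (p ^ i) by rewrite exprAC xq.
have [Tq Tpsi] := psi_sum (index_enum 'I_a) xpredT Hf.
have E : psi (\sum_(i < a) x ^+ (p ^ i)) = \sum_(i < a) psi x ^+ (p ^ i).
  by rewrite Tpsi; apply: eq_bigr => i _; rewrite psiX.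
rewrite -E; apply/eqP/eqP => [/(psi_eq0 Tq)//|->]; exact: psi0.
Qed.

Lemma psi_prim z c : z ^+ q = z -> c.-primitive_root z -> c.-primitive_root (psi z).
Proof.
move=> zq pz; have c0 := prim_order_gt0 pz.
have zc : psi z ^+ c = 1 by rewrite -psiX // (prim_expr_order pz) psi1.
case: (prim_order_exists c0 zc) => m pm mc.
have : z ^+ m = 1.
  apply: psi_inj; first by rewrite exprAC zq.
    by rewrite expr1n.
  by rewrite psiX // psi1 (prim_expr_order pm).
move/eqP; rewrite -(prim_order_dvd pz) => cm.
have -> : c = m by apply/eqP; rewrite eqn_dvd cm mc.
exact: pm.
Qed.

End Psi.

Lemma iso_main (p a : nat) (F F0 : finFieldType) (chF : p \in [pchar F]) (chF0 : p \in [pchar F0])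
  (eta : F) : #|F0| = (p ^ a)%N -> (p ^ a - 1)%N.-primitive_root eta -> (0 < a)%N ->
  exists psi : F -> F0,
  [/\ forall x y, x ^+ (p ^ a) = x -> y ^+ (p ^ a) = y -> psi x = psi y -> x = y,
      forall x y, x ^+ (p ^ a) = x -> y ^+ (p ^ a) = y -> psi (x * y) = psi x * psi y,
      forall x, x ^+ (p ^ a) = x -> (trace p a (psi x) == 0) = (trace p a x == 0),
      forall x n, x ^+ (p ^ a) = x -> psi (x ^+ n) = psi x ^+ n
    & forall z c, z ^+ (p ^ a) = z -> c.-primitive_root z -> c.-primitive_root (psi z)].
Proof.
move=> cF0 Heta Ha.
have [xi Hxi] := xi_exists chF chF0 cF0 Heta Ha.
exists (psi a chF0 eta xi); split.
- exact: (psi_inj Heta Ha Hxi).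
- exact: (psiM Heta Ha Hxi).
- exact: (psi_trace Heta Ha Hxi).
- exact: (psiX Heta Ha Hxi).
- exact: (psi_prim Heta Ha Hxi).
Qed.


End HT5.
Import HT5.

Module HT6.
Set Implicit Arguments. Unset Strict Implicit. Unset Printing Implicit Defensive.
Import GRing.Theory.
Local Open Scope ring_scope.

Lemma sum_shift (R : zmodType) n (f : nat -> R) :
  f n = f 0%N -> \sum_(r < n) f r.+1 = \sum_(r < n) f r.
Proof.
case: n => [|n] E; first by rewrite !big_ord0.
by rewrite big_ord_recr /= E [RHS]big_ord_recl /= addrC.
Qed.

Section Fside.
Variables (p a b : nat) (F : finFieldType) (chF : p \in [pchar F]).
Hypothesis cardF : #|F| = (p ^ (a * b))%N.
Hypothesis Hb : (0 < b)%N.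

Definition Tr (y : F) := \sum_(r < b) y ^+ (p ^ (a * r)).

Lemma yfix (y : F) : y ^+ (p ^ (a * b)) = y.
Proof. by rewrite -cardF expf_card. Qed.

Lemma Kpow (z : F) r : z ^+ (p ^ a) = z -> z ^+ (p ^ (a * r)) = z.
Proof.
move=> zq; elim: r => [|r IH]; first by rewrite muln0 expn0 expr1.
by rewrite mulnS expnD exprM zq IH.
Qed.

Lemma Tr_K y : Tr y ^+ (p ^ a) = Tr y.
Proof.
rewrite /Tr frob_sum //.
rewrite (eq_bigr (fun r : 'I_b => y ^+ (p ^ (a * r.+1)))); last first.
  by move=> r _; rewrite -exprM -expnD mulnS addnC.
rewrite (@sum_shift F b (fun r : nat => y ^+ (p ^ (a * r)))) //=.
by rewrite yfix muln0 expn0 expr1.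
Qed.

Lemma Tr_B y1 y2 : Tr (y1 - y2) = Tr y1 - Tr y2.
Proof.
rewrite /Tr -sumrB; apply: eq_bigr => r _.
by rewrite frobD // (exprNn_pchar _ (pnat_pchar chF _)).
Qed.

Lemma Tr_scal y z : z ^+ (p ^ a) = z -> Tr (y * z) = Tr y * z.
Proof.
move=> zq; rewrite /Tr mulr_suml; apply: eq_bigr => r _.
by rewrite exprMn (Kpow r zq).
Qed.

Lemma trace_split y : trace p (a * b) y = trace p a (Tr y).
Proof.
rewrite /trace /Tr.
rewrite (eq_bigr (fun t : 'I_a => \sum_(r < b) y ^+ (p ^ (a * r + t)))); last first.
  by move=> t _; rewrite frob_sum //; apply: eq_bigr => r _; rewrite -exprM -expnD.
rewrite exchange_big /= -(big_mkord xpredT (fun i => y ^+ (p ^ i))) mulnC.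
rewrite big_nat_mul /= big_mkord; apply: eq_bigr => r _.
rewrite -{1}(add0n (r * a)%N) big_addn mulSn addnK big_mkord.
by apply: eq_bigr => t _; rewrite mulnC addnC.
Qed.

Lemma vander (theta delta : F) :
  (forall r, (0 < r < b)%N -> theta ^+ (p ^ (a * r)) != theta) ->
  (forall j : 'I_b, Tr (delta * theta ^+ j) = 0) -> delta = 0.
Proof.
move=> Hd HT0.
pose t := fun r : nat => theta ^+ (p ^ (a * r)).
pose g := fun r : nat => delta ^+ (p ^ (a * r)).
have HT (j : 'I_b) : Tr (delta * theta ^+ j) = \sum_(r < b) g r * t r ^+ j.
  by rewrite /Tr; apply: eq_bigr => r _; rewrite exprMn exprAC.
pose Q := \prod_(r <- iota 1 b.-1) ('X - (t r)%:P).
have szQ : size Q = b by rewrite size_prod_XsubC size_iota prednK.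
have S : \sum_(r < b) g r * Q.[t r] = 0.
  transitivity (\sum_(r < b) \sum_(i < b) Q`_i * (g r * t r ^+ i)).
    apply: eq_bigr => r _; rewrite horner_coef szQ mulr_sumr.
    by apply: eq_bigr => i _; rewrite mulrCA.
  rewrite exchange_big /=; apply: big1 => i _.
  by rewrite -mulr_sumr -HT HT0 mulr0.
have Qr r : r \in iota 1 b.-1 -> Q.[t r] = 0.
  move=> rin; rewrite horner_prod; apply/eqP; rewrite prodf_seq_eq0.
  by apply/hasP; exists r => //=; rewrite hornerXsubC subrr.
have Q0 : Q.[t 0%N] != 0.
  rewrite horner_prod prodf_seq_neq0; apply/allP => r; rewrite mem_iota => /andP[r1 rb] /=.
  rewrite hornerXsubC subr_eq0 eq_sym /t muln0 expn0 expr1; apply: Hd.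
  move: Hb r1 rb; clear; lia.
move: S; rewrite -(prednK Hb) big_ord_recl big1 ?addr0 => [|r _]; last first.
  rewrite Qr ?mulr0 // lift0 mem_iota; move: (ltn_ord r); clear; lia.
move/eqP; rewrite mulf_eq0 (negbTE Q0) orbF /g muln0 expn0 expr1.
by move/eqP.
Qed.
End Fside.

End HT6.
Import HT6.

Module HT7.
Set Implicit Arguments. Unset Strict Implicit. Unset Printing Implicit Defensive.
Import GRing.Theory.
Local Open Scope ring_scope.

Lemma roots_count (E : finFieldType) c (rho : E) (P : pred E) :
  c.-primitive_root rho ->
  #|[set i : 'I_c | P (rho ^+ i)]| = #|[set z : E | (z ^+ c == 1) && P z]|.
Proof.
move=> pr.
have inj : injective (fun i : 'I_c => rho ^+ i).
  move=> i j /eqP; rewrite (eq_prim_root_expr pr) !modn_small // => /eqP Eij.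
  exact: val_inj Eij.
rewrite -(card_imset _ inj); apply: eq_card => z; rewrite !inE.
apply/imsetP/andP => [[i]|[/eqP zc Pz]].
  by rewrite inE => Pi ->; rewrite -exprM mulnC exprM (prim_expr_order pr) expr1n.
by have [i Ei] := prim_rootP pr zc; exists i; rewrite ?inE -Ei.
Qed.

Lemma card_ord_cast L L' (P : nat -> bool) :
  L = L' -> #|[set i : 'I_L | P i]| = #|[set i : 'I_L' | P i]|.
Proof. by move->. Qed.

Lemma card_inj_set (A B : finType) (g : A -> B) (P : pred B) :
  injective g -> #|A| = #|B| -> #|[set x | P (g x)]| = #|[set y | P y]|.
Proof.
move=> ig cAB; rewrite -(card_imset _ ig); apply: eq_card => y; rewrite !inE.
have [h gK hK] := inj_card_bij ig (eq_leq (esym cAB)).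
apply/imsetP/idP => [[x]|Py]; first by rewrite inE => Px ->.
by exists (h y); rewrite ?inE hK.
Qed.

End HT7.
Import HT7.

Import GRing.Theory.

Theorem theorem2p2
  (p a b c : nat)
  (F : finFieldType) (F0 : finFieldType) (omega : F) (omega0 : F0)
  (ws : seq nat) (w : nat) :
  prime p -> (0 < a)%N -> (1 < b)%N -> (0 < c)%N ->
  primitive_divisor p a c -> (p - 1 %| c)%N ->
  primitive_divisor p (a * b) (b * c) ->
  #|F| = (p ^ (a * b))%N -> #|F0| = (p ^ a)%N ->
  ((p ^ (a * b) - 1)%N.-primitive_root omega)%R ->
  ((p ^ a - 1)%N.-primitive_root omega0)%R ->
  let m := (a * b)%N in
  let n := (b * c)%N in
  let u := ((p ^ a - 1) %/ c)%N in
  let k := ((p ^ m - 1) %/ n)%N in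
  let A0 := freq p a u omega0 in
  uniq ws ->
  (forall v : nat, (v \in ws) = (0 < A0 v)%N) ->
  freq p m k omega w =
  (\sum_(l : {ffun 'I_(size ws) -> 'I_b.+1} |
          ((\sum_(i < size ws) (l i : nat)) == b) &&
          ((\sum_(i < size ws) (l i : nat) * nth 0 ws i) == w))
     multinom b (fun i => (l i : nat)) *
     \prod_(i < size ws) A0 (nth 0 ws i) ^ (l i : nat))%N.
Proof.
move=> Hp Ha Hb Hc [Hca Hcprim] _ [Hnm Hnprim] cardF cardF0 Hom Hom0 m n u k A0 Uws Hws.
have chF : p \in [pchar F]%R := card_finPcharP cardF Hp.
have chF0 : p \in [pchar F0]%R := card_finPcharP cardF0 Hp.
have p1 : (1 < p)%N := prime_gt1 Hp.
have b0 : (0 < b)%N by apply: ltnW.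
have q1 : (1 < p ^ a)%N by rewrite -(expn0 p) ltn_exp2l.
have Q1 : (1 < p ^ (a * b))%N by rewrite -(expn0 p) ltn_exp2l // muln_gt0 Ha.
set N := (p ^ (a * b) - 1)%N.
set N0 := (p ^ a - 1)%N.
have N0pos : (0 < N0)%N by rewrite subn_gt0.
have Npos : (0 < N)%N by rewrite subn_gt0.
have Hk : (k * n = N)%N by rewrite /k divnK.
have Hu : (u * c = N0)%N by rewrite /u divnK.
have npos : (0 < n)%N by rewrite muln_gt0 b0.
have kpos : (0 < k)%N by rewrite lt0n; apply: contraTneq Npos => k0; rewrite -Hk k0 mul0n.
have upos : (0 < u)%N by rewrite lt0n; apply: contraTneq N0pos => u0; rewrite -Hu u0 mul0n.
have clF : code_len p m k = n by rewrite /code_len -/N -Hk mulKn.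
have cl0 : code_len p a u = c by rewrite /code_len -/N0 -Hu mulKn.
set theta := (omega ^+ k)%R.
have Htheta : (n.-primitive_root theta)%R by have := dvdn_prim_root Hom Hnm.
set zeta := (theta ^+ b)%R.
have Hzeta : (c.-primitive_root zeta)%R.
  have := dvdn_prim_root Htheta (dvdn_mull b (dvdnn c)).
  by rewrite /n mulnK.
set zeta0 := (omega0 ^+ u)%R.
have Hzeta0 : (c.-primitive_root zeta0)%R by have := dvdn_prim_root Hom0 Hca.
have zetaK : (zeta ^+ (p ^ a))%R = zeta.
  rewrite -(subnK (ltnW q1)) addn1 GRing.exprS -/N0 -Hu mulnC GRing.exprM.
  by rewrite (prim_expr_order Hzeta) GRing.expr1n GRing.mulr1.
have dN0N : (N0 %| N)%N.
  by have := dvdn_pred_predX (p ^ a) b; rewrite -expnM /N0 /N !subn1.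
set eta := (omega ^+ (N %/ N0))%R.
have Heta : (N0.-primitive_root eta)%R by have := dvdn_prim_root Hom dN0N.
have [psi [psi_inj psiM psi_tr psiX psi_prim]] := iso_main chF chF0 cardF0 Heta Ha.
Local Open Scope ring_scope.
have C1 : forall x : F, x ^+ (p ^ a) = x ->
  cw_weight p a u omega0 (psi x) = #|[set i : 'I_c | trace p a (zeta ^+ i * x) != 0]|.
  move=> x xK.
  rewrite /cw_weight (card_ord_cast (fun i => trace p a (psi x * omega0 ^+ (u * i)) != 0) cl0).
  transitivity #|[set i : 'I_c | trace p a (psi x * zeta0 ^+ i) != 0]|.
    by apply: eq_card => i; rewrite !inE /zeta0 -exprM.
  rewrite (roots_count (fun z => trace p a (psi x * z) != 0) Hzeta0).
  rewrite -(roots_count (fun z => trace p a (psi x * z) != 0) (psi_prim _ _ zetaK Hzeta)).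
  have ziK (i : nat) : (zeta ^+ i) ^+ (p ^ a) = zeta ^+ i by rewrite exprAC zetaK.
  apply: eq_card => i; rewrite !inE.
  rewrite -(psiX zeta i zetaK) -(psiM x (zeta ^+ i) xK (ziK i)).
  rewrite psi_tr; first by rewrite mulrC.
  by rewrite exprMn xK ziK.
have C2 : forall g : F, cw_weight p m k omega g =
  (\sum_(j < b) #|[set i : 'I_c | trace p a (zeta ^+ i * Tr p a b (g * theta ^+ j))%R != 0%R]|)%N.
  move=> g.
  rewrite /cw_weight (card_ord_cast (fun i => trace p m (g * omega ^+ (k * i)) != 0) clF) card_setE.
  rewrite -(big_mkord xpredT (fun i => (trace p m (g * omega ^+ (k * i)) != 0 : nat))).
  rewrite /n [(b * c)%N]mulnC big_nat_mul /=.
  under eq_bigr => i _ do rewrite -{1}(add0n (i * b)%N) big_addn mulSn addnK.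
  rewrite exchange_big /= big_mkord; apply: eq_bigr => j _.
  rewrite card_setE -(big_mkord xpredT (fun i => (trace p a (zeta ^+ i * Tr p a b (g * theta ^+ j)) != 0 : nat))).
  apply: eq_bigr => i _.
  have E : omega ^+ (k * (j + i * b)) = theta ^+ j * zeta ^+ i.
    by rewrite /zeta /theta -!exprM -exprD; congr (_ ^+ _); nia.
  have ziK : (zeta ^+ i) ^+ (p ^ a) = zeta ^+ i by rewrite exprAC zetaK.
  by rewrite E mulrA trace_split // Tr_scal // mulrC.
pose Gm := fun g : F => [ffun j : 'I_b => psi (Tr p a b (g * theta ^+ j))].
have TrK y : Tr p a b y ^+ (p ^ a) = Tr p a b y := Tr_K chF cardF y.
have C3 g : cw_weight p m k omega g = (\sum_j cw_weight p a u omega0 (Gm g j))%N.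
  by rewrite C2; apply: eq_bigr => j _; rewrite ffunE C1.
have Hd : forall r, (0 < r < b)%N -> theta ^+ (p ^ (a * r)) != theta.
  move=> r /andP[r0 rb]; apply/negP; rewrite -{2}(expr1 theta) (eq_prim_root_expr Htheta).
  rewrite eqn_mod_dvd ?expn_gt0 ?(prime_gt0 Hp) //.
  apply/negP; apply: Hnprim; rewrite muln_gt0 Ha r0 /= ltn_pmul2l //.
have Ginj : injective Gm.
  move=> g1 g2 E; apply/eqP; rewrite -subr_eq0; apply/eqP.
  apply: (vander b0 Hd) => j.
  have := congr1 (fun f : {ffun 'I_b -> F0} => f j) E; rewrite /= !ffunE => /psi_inj.
  move=> /(_ (TrK _) (TrK _)) Ej.
  by rewrite mulrBl Tr_B // Ej subrr.
have cEq : #|F| = #|{ffun 'I_b -> F0}| by rewrite card_ffun card_ord cardF cardF0 -expnM.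
rewrite /freq.
transitivity #|[set g : F | (\sum_j cw_weight p a u omega0 (Gm g j) == w)%N]|.
  by apply: eq_card => g; rewrite !inE C3.
rewrite (card_inj_set (fun f : {ffun 'I_b -> F0} => (\sum_j cw_weight p a u omega0 (f j) == w)%N) Ginj cEq).
exact: comb.
Qed.
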